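(* Fix $\sigma>0$, let $\lambda=-\sigma$, and let $q_1,\ldots,q_n\in\Delta^d$ be $n$ i.i.d. samples from the Dirichlet perturbation model $Q=p\oplus D$ described in the context. Consider the fixed-point iteration: given $p(k)\in\Delta^d$, set $\theta(k)=\big(\tfrac{p^0(k)}{\lambda p^1(k)},\ldots,\tfrac{p^0(k)}{\lambda p^d(k)}\big)$, $y_i=F(q_i)=\big(\tfrac{q_i^1}{q_i^0},\ldots,\tfrac{q_i^d}{q_i^0}\big)$, $$\eta(k+1)=\sum_{i=1}^n w_i(\theta(k))\,y_i,\qquad w_i(\theta)=\frac{1/(1+\lambda\,\theta\cdot y_i)}{\sum_{j=1}^n 1/(1+\lambda\,\theta\cdot y_j)},$$ and let $p(k+1)=\Big(\frac{1}{1+\sum_{j=1}^d\eta^j(k+1)},\frac{\eta^1(k+1)}{1+\sum_{j=1}^d\eta^j(k+1)},\ldots,\frac{\eta^d(k+1)}{1+\sum_{j=1}^d\eta^j(k+1)}\Big)$. Then $$p(k+1)=p(k)\oplus\Big(\frac1n\sum_{i=1}^n (q_i\ominus p(k))\Big),$$ where $\frac1n\sum_{i=1}^n$ denotes the ordinary Euclidean average in $\mathbb{R}^{d+1}$. In particular, the update does not depend on $\lambda$ (equivalently on $\sigma$).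
   Context: $\Delta^d=\{p=(p^0,\ldots,p^d)\in(0,1)^{d+1}:p^0+\cdots+p^d=1\}$ is the open unit simplex (superscripts denote components). Perturbation: $p\oplus q:=\big(\frac{p^jq^j}{\sum_{l=0}^d p^lq^l}\big)_{j=0}^d$; difference: $p\ominus q:=\big(\frac{p^j/q^j}{\sum_{l=0}^d p^l/q^l}\big)_{j=0}^d$. Dirichlet perturbation model: for $p\in\Delta^d$ (the parameter) and $D=(D^0,\ldots,D^d)$ a Dirichlet random vector with all parameters equal to $\frac{1}{\sigma(1+d)}$, the observation is $Q=p\oplus D\in\Delta^d$. This model is a $\lambda$-exponential family $(1+\lambda\theta\cdot F(q))_+^{1/\lambda}e^{-\varphi(\theta)}$ with $\lambda=-\sigma$, natural parameter $\theta=\big(\frac{p^0}{\lambda p^1},\ldots,\frac{p^0}{\lambda p^d}\big)\in(-\infty,0)^d$, statistic $F(q)=\big(\frac{q^1}{q^0},\ldots,\frac{q^d}{q^0}\big)$, and dual parameter $\eta=\big(\frac{p^1}{p^0},\ldots,\frac{p^d}{p^0}\big)=\frac1\lambda\big(\frac1{\theta^1},\ldots,\frac1{\theta^d}\big)\in(0,\infty)^d$; the iteration in the claim is the general fixed-point iteration $\eta(k+1)=\sum_i w_i(\theta(k))y_i$, $\theta(k+1)=\frac1\lambda(1/\eta^1(k+1),\ldots,1/\eta^d(k+1))$ written in terms of the simplex parameter $p$. *)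

(* Defs.v *)
From mathcomp Require Import all_boot all_order all_algebra.
Set Implicit Arguments. Unset Strict Implicit. Unset Printing Implicit Defensive.
Import Order.TTheory GRing.Theory Num.Theory.
Local Open Scope ring_scope.

Section Simplex.
Variable R : realFieldType.
Variable d : nat.

(* Points of R^{d+1}, components indexed 0..d; component 0 is ord0 and
   component j+1 (j : 'I_d) is lift ord0 j. *)

Definition in_simplex (p : 'I_d.+1 -> R) : Prop :=
  (forall j, 0 < p j) /\ \sum_(j < d.+1) p j = 1.

Definition perturb (p q : 'I_d.+1 -> R) : 'I_d.+1 -> R :=
  fun j => p j * q j / \sum_(l < d.+1) p l * q l.

Definition cdiff (p q : 'I_d.+1 -> R) : 'I_d.+1 -> R :=
  fun j => (p j / q j) / \sum_(l < d.+1) p l / q l.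

Definition theta_of (lam : R) (p : 'I_d.+1 -> R) : 'I_d -> R :=
  fun j => p ord0 / (lam * p (lift ord0 j)).

Definition Fstat (q : 'I_d.+1 -> R) : 'I_d -> R :=
  fun j => q (lift ord0 j) / q ord0.

Definition dotd (u v : 'I_d -> R) : R := \sum_(j < d) u j * v j.

Definition weight (lam : R) (n : nat) (y : 'I_n -> 'I_d -> R)
    (th : 'I_d -> R) (i : 'I_n) : R :=
  (1 + lam * dotd th (y i))^-1 /
  \sum_(k < n) (1 + lam * dotd th (y k))^-1.

Definition eta_next (lam : R) (n : nat) (y : 'I_n -> 'I_d -> R)
    (th : 'I_d -> R) : 'I_d -> R :=
  fun j => \sum_(i < n) weight lam y th i * y i j.

Definition p_of_eta (eta : 'I_d -> R) : 'I_d.+1 -> R :=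
  fun j => match unlift ord0 j with
           | Some j' => eta j' / (1 + \sum_(l < d) eta l)
           | None => 1 / (1 + \sum_(l < d) eta l)
           end.

Definition fp_update (sigma : R) (n : nat) (q : 'I_n -> 'I_d.+1 -> R)
    (p : 'I_d.+1 -> R) : 'I_d.+1 -> R :=
  p_of_eta (eta_next (- sigma) (fun i => Fstat (q i)) (theta_of (- sigma) p)).

Definition avg (n : nat) (v : 'I_n -> 'I_d.+1 -> R) : 'I_d.+1 -> R :=
  fun j => n%:R^-1 * \sum_(i < n) v i j.

End Simplex.

(* Main.v *)
Require Import Defs.
From mathcomp Require Import all_boot all_order all_algebra.
From mathcomp Require Import ring lra.
Import Order.TTheory GRing.Theory Num.Theory.
Local Open Scope ring_scope.

Lemma sum_gt0_aux (R : realFieldType) m (F : 'I_m -> R) :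
  (0 < m)%N -> (forall i, 0 < F i) -> 0 < \sum_(i < m) F i.
Proof.
case: m F => // m F _ hF; rewrite big_ord_recl.
have h1 := hF ord0.
have : 0 <= \sum_(i < m) F (lift ord0 i) by apply: sumr_ge0 => i _; apply: ltW.
lra.
Qed.

Theorem proposition2 (R : realFieldType) (sigma : R) (d n : nat)
    (q : 'I_n -> 'I_d.+1 -> R) (p : 'I_d.+1 -> R) :
  0 < sigma -> (0 < n)%N ->
  (forall i, in_simplex (q i)) -> in_simplex p ->
  forall j : 'I_d.+1,
    fp_update sigma q p j = perturb p (avg (fun i => cdiff (q i) p)) j.
Proof.
move=> sp n0 hq [hp _] j.
have s0 : sigma != 0 by rewrite gt_eqF.
have pne : forall l, p l != 0 by move=> l; rewrite gt_eqF.
have qne : forall i l, q i l != 0 by move=> i l; rewrite gt_eqF //; case: (hq i).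
set S := fun i => \sum_(l < d.+1) q i l / p l.
have Spos : forall i, 0 < S i.
  move=> i; apply: sum_gt0_aux => // l; apply: divr_gt0; [by case: (hq i)|exact: hp].
have Sne : forall i, S i != 0 by move=> i; rewrite gt_eqF.
set B := fun l => \sum_(i < n) q i l / S i.
have Bpos : forall l, 0 < B l.
  move=> l; apply: sum_gt0_aux => // i; apply: divr_gt0; [by case: (hq i)|exact: Spos].
have Bne : forall l, B l != 0 by move=> l; rewrite gt_eqF.
have SBpos : 0 < \sum_(l < d.+1) B l by apply: sum_gt0_aux.
have SBne : \sum_(l < d.+1) B l != 0 by rewrite gt_eqF.
have Key1 : forall i, 1 + - sigma * dotd (theta_of (- sigma) p) (Fstat (q i))
    = p ord0 * S i / q i ord0.
  move=> i; rewrite /dotd /S big_ord_recl mulr_sumr mulrDr mulrDl mulr_sumr mulr_suml.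
  congr (_ + _); first by field; rewrite ?pne ?qne ?Sne ?Bne ?SBne ?s0 ?oppr_eq0 ?s0.
  apply: eq_bigr => l _; rewrite /theta_of /Fstat; field.
  by rewrite ?pne ?qne ?Sne ?Bne ?SBne ?s0 ?oppr_eq0 ?s0.
have A : \sum_(k < n) (1 + - sigma * dotd (theta_of (- sigma) p) (Fstat (q k)))^-1
    = B ord0 / p ord0.
  rewrite /B mulr_suml; apply: eq_bigr => k _; rewrite Key1; field.
  by rewrite ?pne ?qne ?Sne ?Bne ?SBne ?s0 ?oppr_eq0 ?s0.
have Eta : forall j', eta_next (- sigma) (fun i => Fstat (q i)) (theta_of (- sigma) p) j'
    = B (lift ord0 j') / B ord0.
  move=> j'; rewrite /eta_next /weight /= A; transitivity (\sum_(i < n) q i (lift ord0 j') / S i / B ord0); last by rewrite mulr_suml. apply: eq_bigr => i _.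
  rewrite Key1 /Fstat; field.
  by rewrite ?pne ?qne ?Sne ?Bne ?SBne ?s0 ?oppr_eq0 ?s0.
have Den : 1 + \sum_(l < d) (B (lift ord0 l) / B ord0) = (\sum_(l < d.+1) B l) / B ord0.
  rewrite big_ord_recl mulrDl -mulr_suml; congr (_ + _); by rewrite divff.
have RHS : perturb p (avg (fun i => cdiff (q i) p)) j = B j / \sum_(l < d.+1) B l.
  rewrite /perturb /avg /cdiff.
  have E : forall l, p l * (n%:R^-1 * \sum_(i < n) q i l / p l /
       (\sum_(l0 < d.+1) q i l0 / p l0)) = n%:R^-1 * B l.
    move=> l; rewrite /B mulrCA mulr_sumr; congr (_ * _).
    apply: eq_bigr => i _; rewrite -/(S i); field; by rewrite ?pne ?qne ?Sne ?Bne ?SBne ?s0 ?oppr_eq0 ?s0.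
  rewrite E (eq_bigr _ (fun l _ => E l)) -mulr_sumr; field.
  rewrite SBne /=; have : (0 < n%:R :> R) by rewrite ltr0n. by move=> h; rewrite gt_eqF.
rewrite RHS /fp_update /p_of_eta.
case: unliftP => [j'|] ->.
  rewrite (eq_bigr _ (fun l _ => Eta l)) Den Eta; field; by rewrite ?pne ?qne ?Sne ?Bne ?SBne ?s0 ?oppr_eq0 ?s0.
rewrite (eq_bigr _ (fun l _ => Eta l)) Den; field; by rewrite ?pne ?qne ?Sne ?Bne ?SBne ?s0 ?oppr_eq0 ?s0.
Qed.
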